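(* Let $([v_{ij}:v_{ji}])$ be common lines data for planes $P_1,\dots,P_N$ and fix a triple $(i,j,k)$ of distinct indices that strictly satisfies the spherical triangle inequalities. Then there exist frames $F_i,F_j,F_k$ in generic position which realize the common line pairs $[v_{ij}:v_{ji}]$, $[v_{ik}:v_{ki}]$, $[v_{jk}:v_{kj}]$, i.e. $\iota_i(v_{ij})=\iota_j(v_{ji})$, $\iota_i(v_{ik})=\iota_k(v_{ki})$, $\iota_j(v_{jk})=\iota_k(v_{kj})$. Moreover, if $G_i,G_j,G_k$ are any other frames realizing these same three pairs, then there is $A\in\mathrm O(3)$ with $(AF_i,AF_j,AF_k)=(G_i,G_j,G_k)$.
   Context: A frame is an ordered pair $(a,b)$ of orthonormal vectors in $\mathbb R^3$. Planes $P_1=\dots=P_N=\mathbb R^2$; a frame $F_i=(a_i,b_i)$ gives the embedding $\iota_i:P_i\to\mathbb R^3$, $\iota_i(x,y)=xa_i+yb_i$. Frames are in generic position if their planes $\iota(P)$ are pairwise distinct and the pairwise intersection lines are pairwise distinct. $\mathrm O(3)$ is the group of all $3\times3$ orthogonal matrices, acting on frames by $A(a,b)=(Aa,Ab)$. Common lines data is a collection $([v_{ij}:v_{ji}])_{1\le i<j\le N}$ of elements of $\mathbb P(P_i\times P_j)$ (nonzero pairs $(v_{ij},v_{ji})\in\mathbb R^2\times\mathbb R^2$ up to nonzero scaling) with $\|v_{ij}\|^2=\|v_{ji}\|^2$; indices of a pair may be written in either order. For a triple $(i,j,k)$ and chosen representatives set $\alpha_{ijk}=\cos^{-1}\frac{v_{ij}\cdot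 v_{ik}}{\|v_{ij}\|\|v_{ik}\|}$, $\beta_{ijk}=\cos^{-1}\frac{v_{ji}\cdot v_{jk}}{\|v_{ji}\|\|v_{jk}\|}$, $\gamma_{ijk}=\cos^{-1}\frac{v_{ki}\cdot v_{kj}}{\|v_{ki}\|\|v_{kj}\|}$. The triple strictly satisfies the spherical triangle inequalities if for any choice of representatives $\beta+\gamma>\alpha$, $\alpha+\gamma>\beta$, $\alpha+\beta>\gamma$, $\alpha+\beta+\gamma<2\pi$ (with $\alpha=\alpha_{ijk}$ etc.). *)

(* Defs.v *)
From HB Require Import structures.
From mathcomp Require Import all_boot all_order all_algebra.
From mathcomp Require Import all_classical all_reals all_analysis.
Set Implicit Arguments. Unset Strict Implicit. Unset Printing Implicit Defensive.
Import Order.TTheory GRing.Theory Num.Theory.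
Local Open Scope ring_scope.

Section Defs.
Variable R : realType.

Definition dot n (u w : 'cV[R]_n) : R := (u^T *m w) 0 0.
Definition vnorm n (u : 'cV[R]_n) : R := Num.sqrt (dot u u).

Definition angle n (u w : 'cV[R]_n) : R := acos (dot u w / (vnorm u * vnorm w)).

Definition frame := ('cV[R]_3 * 'cV[R]_3)%type.
Definition is_frame (F : frame) : Prop :=
  dot F.1 F.1 = 1 /\ dot F.2 F.2 = 1 /\ dot F.1 F.2 = 0.

Definition iota (F : frame) (x : 'cV[R]_2) : 'cV[R]_3 := x 0 0 *: F.1 + x 1 0 *: F.2.

(* The plane iota_F(P) = span(a,b), as a row space (rows a^T, b^T). *)
Definition plane (F : frame) : 'M[R]_(2, 3) := col_mx F.1^T F.2^T.

Definition generic3 (F1 F2 F3 : frame) : Prop :=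
  let P1 := plane F1 in let P2 := plane F2 in let P3 := plane F3 in
  [/\ ~~ (P1 == P2)%MS, ~~ (P1 == P3)%MS & ~~ (P2 == P3)%MS] /\
  [/\ ~~ ((P1 :&: P2) == (P1 :&: P3))%MS,
      ~~ ((P1 :&: P2) == (P2 :&: P3))%MS &
      ~~ ((P1 :&: P3) == (P2 :&: P3))%MS].

Definition orthogonal3 (A : 'M[R]_3) : Prop := A *m A^T = 1%:M.

Definition act (A : 'M[R]_3) (F : frame) : frame := (A *m F.1, A *m F.2).

(* Common lines data, given by representatives v i j (= v_ij in P_i), with
   the pair (v i j, v j i) representing [v_ij : v_ji] for i <> j. *)
Definition common_lines_data N (v : 'I_N -> 'I_N -> 'cV[R]_2) : Prop :=
  forall i j : 'I_N, i != j ->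
    (v i j != 0 \/ v j i != 0) /\ dot (v i j) (v i j) = dot (v j i) (v j i).

(* Strict spherical triangle inequalities for the triple (i,j,k), for every
   choice of representatives (c1,c2,c3 nonzero rescale the pairs
   {i,j}, {i,k}, {j,k}). *)
Definition strict_spherical_triangle N (v : 'I_N -> 'I_N -> 'cV[R]_2)
    (i j k : 'I_N) : Prop :=
  forall c1 c2 c3 : R, c1 != 0 -> c2 != 0 -> c3 != 0 ->
    let alpha := angle (c1 *: v i j) (c2 *: v i k) in
    let beta  := angle (c1 *: v j i) (c3 *: v j k) in
    let gamma := angle (c2 *: v k i) (c3 *: v k j) in
    [/\ beta + gamma > alpha, alpha + gamma > beta, alpha + beta > gamma &
        alpha + beta + gamma < 2 * pi].

Definition realizes (Fi Fj : frame) (vij vji : 'cV[R]_2) : Prop :=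
  iota Fi vij = iota Fj vji.

End Defs.

(* Main.v *)
Require Import Defs.
From HB Require Import structures.
From mathcomp Require Import all_boot all_order all_algebra.
From mathcomp Require Import all_classical all_reals all_analysis.
From mathcomp Require Import ring lra.
Import Order.TTheory GRing.Theory Num.Theory.
Local Open Scope ring_scope.
Section P.
Variable R : realType.
Lemma dot3 (u w : 'cV[R]_3) : dot u w = u 0 0 * w 0 0 + u 1 0 * w 1 0 + u 2 0 * w 2 0.
Proof.
rewrite /dot mxE !big_ord_recl big_ord0 !mxE /=.
have -> : lift ord0 ord0 = 1 :> 'I_3 by apply/val_inj.
have -> : lift ord0 (lift ord0 ord0) = 2 :> 'I_3 by apply/val_inj.
by rewrite addr0 addrA.
Qed.
Lemma dot2 (u w : 'cV[R]_2) : dot u w = u 0 0 * w 0 0 + u 1 0 * w 1 0.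
Proof.
rewrite /dot mxE !big_ord_recl big_ord0 !mxE /=.
have -> : lift ord0 ord0 = 1 :> 'I_2 by apply/val_inj.
by rewrite addr0.
Qed.
Lemma iotaE (F : frame R) x r : Defs.iota F x r 0 = x 0 0 * F.1 r 0 + x 1 0 * F.2 r 0.
Proof. by rewrite /Defs.iota !mxE. Qed.
Lemma iota_dot (F : frame R) x y : is_frame F -> dot (Defs.iota F x) (Defs.iota F y) = dot x y.
Proof.
case=> [h1 [h2 h3]]; move: h1 h2 h3; rewrite !dot3 dot2 !iotaE => h1 h2 h3.
set a0 := F.1 0 0 in h1 h3 *; set a1 := F.1 1 0 in h1 h3 *; set a2 := F.1 2 0 in h1 h3 *.
set b0 := F.2 0 0 in h2 h3 *; set b1 := F.2 1 0 in h2 h3 *; set b2 := F.2 2 0 in h2 h3 *.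
transitivity (x 0 0 * y 0 0 * (a0*a0+a1*a1+a2*a2) + (x 0 0 * y 1 0 + x 1 0 * y 0 0) * (a0*b0+a1*b1+a2*b2) + x 1 0 * y 1 0 * (b0*b0+b1*b1+b2*b2)).
  ring.
rewrite h1 h2 h3; ring.
Qed.
Definition det2 (p q : 'cV[R]_2) := p 0 0 * q 1 0 - p 1 0 * q 0 0.
Definition recon (p q : 'cV[R]_2) (P Q : 'cV[R]_3) : frame R :=
  ((q 1 0 / det2 p q) *: P + (- p 1 0 / det2 p q) *: Q,
   (- q 0 0 / det2 p q) *: P + (p 0 0 / det2 p q) *: Q).
Lemma dot_comb (u w : 'cV[R]_3) a b c d :
  dot (a*:u+b*:w) (c*:u+d*:w) = a*c*dot u u + (a*d + b*c) * dot u w + b*d*dot w w.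
Proof. rewrite !dot3 !mxE; ring. Qed.
Lemma dotC n (u w : 'cV[R]_n) : dot u w = dot w u.
Proof. rewrite /dot !mxE; apply: eq_bigr => l _; rewrite !mxE mulrC. done. Qed.
Lemma recon_unique (F : frame R) p q : det2 p q != 0 ->
  F = recon p q (Defs.iota F p) (Defs.iota F q).
Proof.
move=> d0; case: F => a b; rewrite /recon; congr pair; apply/matrixP => r c;
 rewrite (ord1 c) !mxE /=; rewrite /det2 in d0 *; field; exact d0.
Qed.
Lemma recon_frame p q P Q : det2 p q != 0 -> dot P P = dot p p -> dot Q Q = dot q q ->
  dot P Q = dot p q ->
  [/\ is_frame (recon p q P Q), Defs.iota (recon p q P Q) p = P & Defs.iota (recon p q P Q) q = Q].
Proof.
move=> d0 hPP hQQ hPQ; split.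
- rewrite /is_frame /recon /= !dot_comb hPP hQQ hPQ !dot2; rewrite /det2 in d0 *.
  split; [|split]; field; exact d0.
- apply/matrixP => r c; rewrite (ord1 c) iotaE /recon /= !mxE; rewrite /det2 in d0 *; field; exact d0.
- apply/matrixP => r c; rewrite (ord1 c) iotaE /recon /= !mxE; rewrite /det2 in d0 *; field; exact d0.
Qed.
Definition mx3 (U0 U1 U2 : 'cV[R]_3) : 'M[R]_3 :=
  \matrix_(l, c) [:: U0 l 0; U1 l 0; U2 l 0]`_c.
Lemma col_mx3 U0 U1 U2 (r : 'I_3) : col r (mx3 U0 U1 U2) = nth 0 [:: U0; U1; U2] r.
Proof.
apply/matrixP => l c; rewrite !mxE (ord1 c); case: r => [[|[|[|?]]] ?] //=.

Qed.
Lemma gramE (N : 'M[R]_3) r c : (N^T *m N) r c = dot (col r N) (col c N).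
Proof. rewrite /dot !mxE; apply: eq_bigr => l _; rewrite !mxE. done. Qed.
Lemma exists_orth (U0 U1 U2 V0 V1 V2 : 'cV[R]_3) :
  mx3 U0 U1 U2 \in unitmx ->
  (forall r c : 'I_3, dot (nth 0 [::U0;U1;U2] r) (nth 0 [::U0;U1;U2] c)
     = dot (nth 0 [::V0;V1;V2] r) (nth 0 [::V0;V1;V2] c)) ->
  exists A, orthogonal3 A /\ [/\ A *m U0 = V0, A *m U1 = V1 & A *m U2 = V2].
Proof.
set T := mx3 U0 U1 U2; set T' := mx3 V0 V1 V2 => uT hG.
have G : T^T *m T = T'^T *m T'.
  by apply/matrixP => r c; rewrite !gramE !col_mx3.
have AT : (T' *m invmx T) *m T = T' by rewrite mulmxKV.
exists (T' *m invmx T); split.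
  apply: mulmx1C.
  rewrite trmx_mul mulmxA -(mulmxA _ T'^T) -G mulmxA -trmx_mul -mulmxA mulmxV //.
  by rewrite trmx1 mul1mx.
have colT (c : 'I_3) : (T' *m invmx T) *m nth 0 [:: U0; U1; U2] c = nth 0 [:: V0; V1; V2] c.
  by rewrite -!col_mx3 -/T -/T' !colE mulmxA AT.
by split; [exact: (colT 0) | exact: (colT 1) | exact: (colT 2)].
Qed.
Lemma cos_sq_lt1 (x : R) : 0 < x < pi -> cos x ^+ 2 < 1.
Proof.
case/andP=> h0 hp.
have pi0 : 0 < pi :> R by apply: lt_trans hp.
have i0 : x \in `[0, pi] by rewrite in_itv /=; apply/andP; split; apply: ltW.
have a : cos x < 1.
  rewrite -cos0 ltr_cos // in_itv /= lexx; exact: ltW.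
have b : -1 < cos x.
  rewrite -cospi ltr_cos // in_itv /= lexx andbT; exact: ltW.
nra.
Qed.
Lemma cos_lt2 (x y : R) : 0 <= x <= pi -> 0 <= y <= pi -> x < y -> cos y < cos x.
Proof. move=> hx hy xy; rewrite ltr_cos // in_itv /=. Qed.
Lemma trig (al be ga : R) : 0 <= al <= pi -> 0 <= be <= pi -> 0 <= ga <= pi ->
  be + ga > al -> al + ga > be -> al + be > ga -> al + be + ga < 2 * pi ->
  [/\ cos al ^+2 < 1, cos be ^+2 < 1, cos ga ^+ 2 < 1 &
   0 < 1 - cos al ^+2 - cos be ^+2 - cos ga ^+2 + 2 * cos al * cos be * cos ga].
Proof.
move=> /andP[a0 a1] /andP[b0 b1] /andP[g0 g1] t1 t2 t3 t4.
split; try (apply: cos_sq_lt1; apply/andP; split; lra).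
have E : 1 - cos al ^+2 - cos be ^+2 - cos ga ^+2 + 2 * cos al * cos be * cos ga
   = (cos (al - be) - cos ga) * (cos ga - cos (al + be)).
  transitivity (sin al ^+2 * sin be ^+ 2 - (cos ga - cos al * cos be)^+2).
    rewrite !sin2cos2; ring.
  rewrite cosB cosD; ring.
rewrite E; apply: mulr_gt0; rewrite subr_gt0.
- case: (lerP be al) => h.
    apply: cos_lt2; try (apply/andP; split); lra.
  rewrite -(cosN (al - be)) opprB; apply: cos_lt2; try (apply/andP; split); lra.
- case: (lerP (al + be) pi) => h.
    apply: cos_lt2; try (apply/andP; split); lra.
  have -> : cos (al + be) = cos (- (al + be) + pi *+ 2) by rewrite cosD2pi cosN.
  rewrite -mulr_natl; apply: cos_lt2; try (apply/andP; split); lra.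
Qed.
Definition col3 (a b c : R) : 'cV[R]_3 := \col_(l < 3) [:: a; b; c]`_l.
Lemma dot_col3 a b c a' b' c' : dot (col3 a b c) (col3 a' b' c') = a * a' + b * b' + c * c'.
Proof. by rewrite dot3 !mxE. Qed.
Lemma mx3_unit a b c d e f : a * c * f != 0 ->
  mx3 (col3 a 0 0) (col3 b c 0) (col3 d e f) \in unitmx.
Proof.
move=> h; rewrite -unitmx_tr unitmxE det_trig.
  rewrite !big_ord_recl big_ord0 !mxE /= mulr1 unitfE mulrA; exact h.
apply/is_trig_mxP => i j; case: i => [[|[|[|?]]] ?]; case: j => [[|[|[|?]]] ?] //= _;
  by rewrite !mxE.
Qed.
Lemma dot2_ge0 (p : 'cV[R]_2) : 0 <= dot p p.
Proof. rewrite dot2; nra. Qed.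
Lemma dot2_gt0 (p : 'cV[R]_2) : p != 0 -> 0 < dot p p.
Proof.
move=> hp; rewrite lt_def dot2_ge0 andbT; apply/eqP => h; apply: (negP hp); apply/eqP.
have h0 : p 0 0 = 0 by move: h; rewrite dot2 => h; nra.
have h1 : p 1 0 = 0 by move: h; rewrite dot2 => h; nra.
apply/matrixP => r c; rewrite (ord1 c) mxE; case: r => [[|[|//]] Hr].
  by rewrite -h0; congr (p _ _); apply/val_inj.
by rewrite -h1; congr (p _ _); apply/val_inj.
Qed.
Lemma det2_sq (p q : 'cV[R]_2) : det2 p q ^+ 2 = dot p p * dot q q - dot p q ^+ 2.
Proof. rewrite /det2 !dot2; ring. Qed.
Lemma vnorm_facts (p : 'cV[R]_2) : 0 < dot p p -> 0 < vnorm p /\ vnorm p ^+ 2 = dot p p.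
Proof. move=> h; rewrite /vnorm sqrtr_gt0 h sqr_sqrtr //; exact: ltW. Qed.
Lemma angle_cos (p q : 'cV[R]_2) : 0 < dot p p -> 0 < dot q q ->
  [/\ 0 <= angle p q <= pi & dot p q = vnorm p * vnorm q * cos (angle p q)].
Proof.
move=> hp hq; have [np np2] := vnorm_facts p hp; have [nq nq2] := vnorm_facts q hq.
set s := vnorm p * vnorm q.
have s0 : 0 < s by apply: mulr_gt0.
have cs : dot p q ^+ 2 <= s ^+ 2.
  rewrite /s exprMn np2 nq2 -subr_ge0 -det2_sq; exact: sqr_ge0.
set x := dot p q / s.
have xs : x * s = dot p q by rewrite /x divfK // gt_eqF.
have x2 : x ^+ 2 <= 1.
  have s2 : 0 < s ^+ 2 by apply: exprn_gt0.
  by rewrite -(ler_pM2r s2) mul1r -exprMn xs.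
have xi : -1 <= x <= 1 by apply/andP; split; nra.
rewrite /angle -/s -/x; split; first by rewrite acos_ge0 // acos_lepi.
by rewrite acosK ?in_itv //= mulrC.
Qed.
Lemma plane0 (F : frame R) r : plane F 0 r = F.1 r 0.
Proof.
rewrite /plane; have -> : (0 : 'I_2) = @lshift 1 1 ord0 by apply/val_inj.
have h := col_mxEu F.1^T F.2^T ord0 r; rewrite [X in _ = X]mxE in h; exact h.
Qed.
Lemma plane1 (F : frame R) r : plane F 1 r = F.2 r 0.
Proof.
rewrite /plane; have -> : (1 : 'I_2) = @rshift 1 1 ord0 by apply/val_inj.
have h := col_mxEd F.1^T F.2^T ord0 r; rewrite [X in _ = X]mxE in h; exact h.
Qed.
Lemma rowmul_plane (D : 'rV[R]_2) (F : frame R) : D *m plane F = (D 0 0 *: F.1 + D 0 1 *: F.2)^T.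
Proof.
apply/matrixP => a r; rewrite (ord1 a) !mxE !big_ord_recl big_ord0 /=.
have -> : lift ord0 ord0 = 1 :> 'I_2 by apply/val_inj.
by rewrite plane0 plane1 addr0.
Qed.
Lemma iota_mem (F : frame R) x : ((Defs.iota F x)^T <= plane F)%MS.
Proof.
apply/submxP; exists x^T; rewrite rowmul_plane /Defs.iota !mxE. done.
Qed.
Lemma plane_span (F : frame R) w : (w^T <= plane F)%MS -> exists c0 c1, w = c0 *: F.1 + c1 *: F.2.
Proof.
case/submxP => D; rewrite rowmul_plane => /(congr1 trmx); rewrite !trmxK => ->.
by exists (D 0 0), (D 0 1).
Qed.
Lemma recon_span p q (P Q w : 'cV[R]_3) : (w^T <= plane (recon p q P Q))%MS ->
  exists a b, forall r, w r 0 = a * P r 0 + b * Q r 0.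
Proof.
case/plane_span => c0 [c1 ->]; rewrite /recon /=.
eexists; eexists => r; rewrite !mxE.
set x1 := (_ / _); set x2 := (_ / _); set x3 := (_ / _); set x4 := (_ / _).
transitivity ((c0 * x1 + c1 * x3) * P r 0 + (c0 * x2 + c1 * x4) * Q r 0); first ring.
reflexivity.
Qed.
Lemma act_recon A p q (P Q : 'cV[R]_3) : act A (recon p q P Q) = recon p q (A *m P) (A *m Q).
Proof. by rewrite /act /recon /= !mulmxDr !scalemxAr. Qed.
Lemma det2_nz (p q : 'cV[R]_2) : dot p q ^+ 2 < dot p p * dot q q -> det2 p q != 0.
Proof.
rewrite -subr_gt0 -det2_sq => h; apply/eqP => e; move: h; rewrite e expr0n /= ltxx. done.
Qed.
Lemma sq_lt (a b c : R) : 0 < a -> 0 < b -> c ^+ 2 < 1 -> (a * b * c) ^+ 2 < a ^+ 2 * b ^+ 2.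
Proof.
move=> a0 b0 c1.
have -> : (a * b * c) ^+ 2 = (a * b) ^+ 2 * c ^+ 2 by rewrite exprMn.
have -> : a ^+ 2 * b ^+ 2 = (a * b) ^+ 2 * 1 by rewrite mulr1 exprMn.
by rewrite ltr_pM2l // exprn_gt0 // mulr_gt0.
Qed.
Lemma col3E a b c : [/\ col3 a b c 0 0 = a, col3 a b c 1 0 = b & col3 a b c 2 0 = c].
Proof. by rewrite !mxE. Qed.
Lemma zero_of (b x : R) : 0 < x -> 0 = b * x -> b = 0.
Proof. by move=> hx /esym /eqP; rewrite mulf_eq0 (gt_eqF hx) orbF => /eqP. Qed.
End P.
Arguments recon_frame {R p q P Q}.
Arguments col3 {R}.
Arguments det2 {R}.
Arguments recon {R}.
Arguments mx3 {R}.
Arguments recon_unique {R} F p q.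
Arguments recon_span {R p q P Q w}.
Arguments exists_orth {R U0 U1 U2 V0 V1 V2}.
Theorem proposition1 (R : realType) (N : nat) (v : 'I_N -> 'I_N -> 'cV[R]_2)
  (i j k : 'I_N) :
  common_lines_data v ->
  i != j -> i != k -> j != k ->
  strict_spherical_triangle v i j k ->
  exists Fi Fj Fk : frame R,
    [/\ is_frame Fi, is_frame Fj, is_frame Fk & generic3 Fi Fj Fk] /\
    [/\ realizes Fi Fj (v i j) (v j i),
        realizes Fi Fk (v i k) (v k i),
        realizes Fj Fk (v j k) (v k j) &
        forall Gi Gj Gk : frame R,
          is_frame Gi -> is_frame Gj -> is_frame Gk ->
          realizes Gi Gj (v i j) (v j i) ->
          realizes Gi Gk (v i k) (v k i) ->
          realizes Gj Gk (v j k) (v k j) ->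
          exists A : 'M[R]_3, orthogonal3 A /\
            (act A Fi, act A Fj, act A Fk) = (Gi, Gj, Gk)].
Proof.
move=> hcl hij hik hjk hst.
have [nz1 e1] := hcl i j hij.
have [nz2 e2] := hcl i k hik.
have [nz3 e3] := hcl j k hjk.
have pos (p q : 'cV[R]_2) : (p != 0 \/ q != 0) -> dot p p = dot q q -> 0 < dot p p.
  by move=> [h|h] e; [exact: dot2_gt0| rewrite e; exact: dot2_gt0].
have p1 := pos _ _ nz1 e1; have p2 := pos _ _ nz2 e2; have p3 := pos _ _ nz3 e3.
have p1' : 0 < dot (v j i) (v j i) by rewrite -e1.
have p2' : 0 < dot (v k i) (v k i) by rewrite -e2.
have p3' : 0 < dot (v k j) (v k j) by rewrite -e3.
have [A1 D1] := angle_cos _ _ _ p1 p2.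
have [A2 D2] := angle_cos _ _ _ p1' p3.
have [A3 D3] := angle_cos _ _ _ p2' p3'.
have := hst 1 1 1 (oner_neq0 _) (oner_neq0 _) (oner_neq0 _); rewrite !scale1r /= => -[t1 t2 t3 t4].
have [c1 c2 c3 cdet] := trig _ _ _ _ A1 A2 A3 t1 t2 t3 t4.
have nji : vnorm (v j i) = vnorm (v i j) by rewrite /vnorm e1.
have nki : vnorm (v k i) = vnorm (v i k) by rewrite /vnorm e2.
have nkj : vnorm (v k j) = vnorm (v j k) by rewrite /vnorm e3.
rewrite nji in D2; rewrite nki nkj in D3.
have [r1p r1s] := vnorm_facts _ _ p1; have [r2p r2s] := vnorm_facts _ _ p2;
  have [r3p r3s] := vnorm_facts _ _ p3.
move: A1 A2 A3 t1 t2 t3 t4 c1 c2 c3 cdet D1 D2 D3 r1p r1s r2p r2s r3p r3s.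
set r1 := vnorm (v i j); set r2 := vnorm (v i k); set r3 := vnorm (v j k).
set ca := cos (angle (v i j) (v i k)); set cb := cos (angle (v j i) (v j k));
set cc := cos (angle (v k i) (v k j)).
move=> A1 A2 A3 t1 t2 t3 t4 c1 c2 c3 cdet D1 D2 D3 r1p r1s r2p r2s r3p r3s.
clear A1 A2 A3 t1 t2 t3 t4; clearbody r1 r2 r3 ca cb cc.
have ca1 : 0 < 1 - ca ^+ 2 by rewrite subr_gt0.
set sa := Num.sqrt (1 - ca ^+ 2).
have sap : 0 < sa by rewrite sqrtr_gt0.
have sas : sa ^+ 2 = 1 - ca ^+ 2 by rewrite sqr_sqrtr // ltW.
clearbody sa.
have sa0 : sa != 0 by rewrite gt_eqF.
set t := (cc - ca * cb) / sa.
have sat : sa * t = cc - ca * cb by rewrite /t mulrC divfK.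
have wp : 0 < 1 - cb ^+ 2 - t ^+ 2.
  have -> : 1 - cb ^+ 2 - t ^+ 2 =
      (1 - ca ^+ 2 - cb ^+ 2 - cc ^+ 2 + 2 * ca * cb * cc) / sa ^+ 2.
    rewrite /t expr_div_n sas; field; by rewrite gt_eqF.
  by rewrite divr_gt0 // exprn_gt0.
clearbody t.
set u := Num.sqrt (1 - cb ^+ 2 - t ^+ 2).
have up : 0 < u by rewrite sqrtr_gt0.
have us : u ^+ 2 = 1 - cb ^+ 2 - t ^+ 2 by rewrite sqr_sqrtr // ltW.
clearbody u.
set U0 := col3 r1 0 0; set U1 := col3 (r2 * ca) (r2 * sa) 0;
set U2 := col3 (r3 * cb) (r3 * t) (r3 * u).
have d00 : dot U0 U0 = dot (v i j) (v i j) by rewrite dot_col3 -r1s; ring.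
have d11 : dot U1 U1 = dot (v i k) (v i k).
  rewrite dot_col3 -r2s; transitivity (r2 ^+ 2 * (ca ^+ 2 + sa ^+ 2)); first ring.
  rewrite sas; ring.
have d22 : dot U2 U2 = dot (v j k) (v j k).
  rewrite dot_col3 -r3s; transitivity (r3 ^+ 2 * (cb ^+ 2 + t ^+ 2 + u ^+ 2)); first ring.
  rewrite us; ring.
have d01 : dot U0 U1 = dot (v i j) (v i k) by rewrite dot_col3 D1; ring.
have d02 : dot U0 U2 = dot (v j i) (v j k) by rewrite dot_col3 D2; ring.
have d12 : dot U1 U2 = dot (v k i) (v k j).
  rewrite dot_col3 D3; transitivity (r2 * r3 * (ca * cb + sa * t)); first ring.
  rewrite sat; ring.
have di : det2 (v i j) (v i k) != 0.
  by apply: det2_nz; rewrite D1 -r1s -r2s; exact: sq_lt.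
have dj : det2 (v j i) (v j k) != 0.
  by apply: det2_nz; rewrite D2 -e1 -r1s -r3s; exact: sq_lt.
have dk : det2 (v k i) (v k j) != 0.
  by apply: det2_nz; rewrite D3 -e2 -e3 -r2s -r3s; exact: sq_lt.
have [fi fi1 fi2] := recon_frame di d00 d11 d01.
have d00' : dot U0 U0 = dot (v j i) (v j i) by rewrite d00 e1.
have [fj fj1 fj2] := recon_frame dj d00' d22 d02.
have d11' : dot U1 U1 = dot (v k i) (v k i) by rewrite d11 e2.
have d22' : dot U2 U2 = dot (v k j) (v k j) by rewrite d22 e3.
have [fk fk1 fk2] := recon_frame dk d11' d22' d12.
exists (recon (v i j) (v i k) U0 U1), (recon (v j i) (v j k) U0 U2),
  (recon (v k i) (v k j) U1 U2).
split.
  split => //.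
  have m0i := iota_mem _ (recon (v i j) (v i k) U0 U1) (v i j); rewrite fi1 in m0i.
  have m1i := iota_mem _ (recon (v i j) (v i k) U0 U1) (v i k); rewrite fi2 in m1i.
  have m0j := iota_mem _ (recon (v j i) (v j k) U0 U2) (v j i); rewrite fj1 in m0j.
  have m2j := iota_mem _ (recon (v j i) (v j k) U0 U2) (v j k); rewrite fj2 in m2j.
  have m1k := iota_mem _ (recon (v k i) (v k j) U1 U2) (v k i); rewrite fk1 in m1k.
  have m2k := iota_mem _ (recon (v k i) (v k j) U1 U2) (v k j); rewrite fk2 in m2k.
  move: m0i m1i m0j m2j m1k m2k.
  set Pi := plane _; set Pj := plane _; set Pk := plane _.
  move=> m0i m1i m0j m2j m1k m2k.
  have r3u : 0 < r3 * u by rewrite mulr_gt0.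
  have r2sa : 0 < r2 * sa by rewrite mulr_gt0.
  have nA : ~ (U2^T <= Pi)%MS.
    move/recon_span => [a [b h]]; have h2 := h 2; rewrite !mxE /= in h2.
    by move: h2; rewrite !mulr0 addr0 => h2; rewrite h2 ltxx in r3u.
  have nB : ~ (U1^T <= Pj)%MS.
    move/recon_span => [a [b h]]; have h1 := h 1; have h2 := h 2; rewrite !mxE /= in h1 h2.
    move: h2; rewrite mulr0 add0r => /(zero_of _ _ _ r3u) b0.
    by move: h1; rewrite b0 mulr0 mul0r addr0 => h1; rewrite h1 ltxx in r2sa.
  have nC : ~ (U0^T <= Pk)%MS.
    move/recon_span => [a [b h]]; have h0 := h 0; have h1 := h 1; have h2 := h 2;
    rewrite !mxE /= in h0 h1 h2.
    move: h2; rewrite mulr0 add0r => /(zero_of _ _ _ r3u) b0.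
    move: h1; rewrite b0 mul0r addr0 => /(zero_of _ _ _ r2sa) a0.
    by move: h0; rewrite a0 b0 !mul0r addr0 => h0; rewrite h0 ltxx in r1p.
  have capm (P Q : 'M[R]_(2, 3)) w : (w^T <= P)%MS -> (w^T <= Q)%MS -> (w^T <= P :&: Q)%MS.
    by move=> h1 h2; rewrite sub_capmx h1 h2.
  split; split; apply/negP => /andP [s1 s2].
  - by apply: nA; apply: submx_trans m2j s2.
  - by apply: nA; apply: submx_trans m2k s2.
  - by apply: nB; apply: submx_trans m1k s2.
  - apply: nC; apply: submx_trans (capmxSr Pi Pk); apply: submx_trans s1; exact: capm.
  - apply: nC; apply: submx_trans (capmxSr Pj Pk); apply: submx_trans s1; exact: capm.
  - apply: nB; apply: submx_trans (capmxSl Pj Pk); apply: submx_trans s1; exact: capm.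
split.
- by rewrite /realizes fi1 fj1.
- by rewrite /realizes fi2 fk1.
- by rewrite /realizes fj2 fk2.
move=> Gi Gj Gk gi gj gk; rewrite /realizes => rij rik rjk.
have un : mx3 U0 U1 U2 \in unitmx.
  by apply: mx3_unit; rewrite !mulf_neq0 // gt_eqF // mulr_gt0.
have e00 : dot U0 U0 = dot (Defs.iota Gi (v i j)) (Defs.iota Gi (v i j)) by rewrite iota_dot // d00.
have e01 : dot U0 U1 = dot (Defs.iota Gi (v i j)) (Defs.iota Gi (v i k)) by rewrite iota_dot // d01.
have e02 : dot U0 U2 = dot (Defs.iota Gi (v i j)) (Defs.iota Gj (v j k)) by rewrite rij iota_dot // d02.
have e11 : dot U1 U1 = dot (Defs.iota Gi (v i k)) (Defs.iota Gi (v i k)) by rewrite iota_dot // d11.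
have e12 : dot U1 U2 = dot (Defs.iota Gi (v i k)) (Defs.iota Gj (v j k)) by rewrite rik rjk iota_dot // d12.
have e22 : dot U2 U2 = dot (Defs.iota Gj (v j k)) (Defs.iota Gj (v j k)) by rewrite iota_dot // d22.
have gram : forall r c : 'I_3,
  dot (nth 0 [:: U0; U1; U2] r) (nth 0 [:: U0; U1; U2] c) =
  dot (nth 0 [:: Defs.iota Gi (v i j); Defs.iota Gi (v i k); Defs.iota Gj (v j k)] r)
      (nth 0 [:: Defs.iota Gi (v i j); Defs.iota Gi (v i k); Defs.iota Gj (v j k)] c).
  move=> r c; case: r => [[|[|[|//]]] ?]; case: c => [[|[|[|//]]] ?] /=;
  first [by rewrite ?e00 ?e01 ?e02 ?e11 ?e12 ?e22 | by rewrite dotC ?e01 ?e02 ?e12 dotC].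
have [A [oA [a0 a1 a2]]] := exists_orth un gram.
  exists A; split => //.
  rewrite !act_recon a0 a1 a2.
  rewrite -(recon_unique Gi (v i j) (v i k) di) rij -(recon_unique Gj (v j i) (v j k) dj).
  by rewrite rik rjk -(recon_unique Gk (v k i) (v k j) dk).
Qed.
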